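(* Let $I\subset\mathbb R$ be an open interval, $f_l,f_r:I\to\mathbb R$ continuously differentiable, $u_l,u_r\in\mathbb R$, and $f:=f_l+f_r+u_r-u_l$. Suppose $p^*\in I$ satisfies $f(p^* )=0$ and $f'(p^* )\ne0$, and set $u^*:=\frac12\big(u_l+u_r+f_r(p^* )-f_l(p^* )\big)$. Let $\eta\in(0,1)$. Then there exists $\epsilon>0$ such that the following holds. Let real sequences $(p_n),(F_{n,l}),(F_{n,r}),(F'_{n,l}),(F'_{n,r})$ be given, and set $F_n:=F_{n,l}+F_{n,r}+u_r-u_l$, $F'_n:=F'_{n,l}+F'_{n,r}$, with $F'_n\ne0$ and $$p_{n+1}=p_n-\frac{F_n}{F'_n},\qquad u_n=\tfrac12\big(u_l+u_r+F_{n,r}-F_{n,l}\big).$$ Assume $|p_0-p^*|\le\epsilon$, the sequence $(F'_n)$ is bounded, and for every $n$ with $p_n\in I$ and each $k\in\{l,r\}$, $$|F_{n,k}-f_k(p_n)|\le\tfrac16\eta|F_n|,\qquad |F'_{n,k}-f_k'(p_n)|\le\tfrac16\eta|F'_n|.$$ Then $p_n\to p^*$ and $u_n\to u^*$. *)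

(* Defs.v *)
From Stdlib Require Import Reals.
Open Scope R_scope.

(* An open interval of R: a nonempty-or-not open, convex subset of R
   (this covers bounded and unbounded open intervals). *)
Definition is_open_interval (I : R -> Prop) : Prop :=
  (forall x y z, I x -> I z -> x <= y <= z -> I y) /\
  (forall x, I x -> exists d, 0 < d /\ forall y, Rabs (y - x) < d -> I y).

Definition C1_on (I : R -> Prop) (g g' : R -> R) : Prop :=
  forall x, I x -> derivable_pt_lim g x (g' x) /\ continuity_pt g' x.

(* Main.v *)
Require Import Defs.
From Stdlib Require Import Reals.
From Stdlib Require Import Lra Psatz.
Open Scope R_scope.

Lemma step c e G G' gp gp' gxi D :
 0 < c -> 3*c < 1 -> G' <> 0 -> D <> 0 ->
 Rabs (G - gp) <= c * Rabs G ->
 Rabs (G' - gp') <= c * Rabs G' ->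
 gp = gxi * e ->
 Rabs (gp' - D) <= (1-3*c)/16 * Rabs D ->
 Rabs (gxi - D) <= (1-3*c)/16 * Rabs D ->
 Rabs (e - G/G') <= (1+c)/(2*(1-c)) * Rabs e /\
 (1-c) * Rabs G <= (1+(1-3*c)/16) * Rabs D * Rabs e.
Proof.
intros c0 c1 G'0 D0 h1 h2 h3 h4 h5.
assert (hk : 0 < (1-3*c)/16 < 1/16) by lra.
remember ((1-3*c)/16) as k eqn:Hk.
assert (ha : 0 <= Rabs e) by apply Rabs_pos.
assert (hX : 0 < Rabs G') by (apply Rabs_pos_lt; auto).
assert (hY : 0 < Rabs D) by (apply Rabs_pos_lt; auto).
assert (hZ : 0 <= Rabs G) by apply Rabs_pos.
assert (hgx : Rabs gxi <= (1+k)*Rabs D).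
{ pose proof (Rabs_triang (gxi - D) D). replace (gxi - D + D) with gxi in H by ring. lra. }
assert (hgp : Rabs gp <= (1+k)*Rabs D*Rabs e).
{ rewrite h3, Rabs_mult. apply Rmult_le_compat_r; [apply Rabs_pos|exact hgx]. }
assert (hZb : (1-c)*Rabs G <= (1+k)*Rabs D*Rabs e).
{ pose proof (Rabs_triang (G - gp) gp). replace (G - gp + gp) with G in H by ring. lra. }
assert (hXb : (1-k)*Rabs D <= (1+c)*Rabs G').
{ pose proof (Rabs_triang (D - gp') (gp' - G')). pose proof (Rabs_triang (D - gp' + (gp'-G')) G').
  replace (D - gp' + (gp' - G') + G') with D in H0 by ring.
  rewrite Rabs_minus_sym in H. rewrite (Rabs_minus_sym gp' G') in H. lra. }
split; [|exact hZb].
assert (eq : e - G/G' = (e*(G'-gp') + e*(gp'-gxi) + (gp - G)) / G').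
{ field_simplify_eq; auto. rewrite h3. ring. }
rewrite eq. unfold Rdiv. rewrite Rabs_mult, Rabs_inv.
assert (b1 : Rabs (e*(G'-gp')) <= Rabs e*(c*Rabs G')).
{ rewrite Rabs_mult. apply Rmult_le_compat_l; auto. }
assert (b2 : Rabs (e*(gp'-gxi)) <= Rabs e*(2*k*Rabs D)).
{ rewrite Rabs_mult. apply Rmult_le_compat_l; auto.
  pose proof (Rabs_triang (gp' - D) (D - gxi)). replace (gp' - D + (D - gxi)) with (gp' - gxi) in H by ring.
  rewrite (Rabs_minus_sym D gxi) in H. lra. }
assert (b3 : Rabs (gp - G) <= c*Rabs G) by (rewrite Rabs_minus_sym; auto).
assert (tot : Rabs (e*(G'-gp') + e*(gp'-gxi) + (gp - G)) <= Rabs e*(c*Rabs G') + Rabs e*(2*k*Rabs D) + c*Rabs G).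
{ pose proof (Rabs_triang (e*(G'-gp') + e*(gp'-gxi)) (gp - G)).
  pose proof (Rabs_triang (e*(G'-gp')) (e*(gp'-gxi))). lra. }
revert tot hZb hXb hX hY hZ ha. generalize (Rabs e) (Rabs G') (Rabs D) (Rabs G).
intros a X Y Z tot hZb hXb hX hY hZ ha.
apply (Rmult_le_reg_r X); auto.
rewrite Rmult_assoc, Rinv_l by lra. rewrite Rmult_1_r.
assert (poly : (1-c+2*c*c)*(1-k) - 2*(1+c)*(2*k*(1-c) + c*(1+k)) >= 0).
{ rewrite Hk. nra. }
assert (stuff : ((1+c)/2 - c*(1-c))*X - (2*k*(1-c) + c*(1+k))*Y >= 0).
{ assert (q1 : (1-c+2*c*c)/2 * ((1-k)*Y) <= (1-c+2*c*c)/2 * ((1+c)*X)).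
  { apply Rmult_le_compat_l; [nra|exact hXb]. }
  assert (q2 : 0 <= Y * ((1-c+2*c*c)*(1-k) - 2*(1+c)*(2*k*(1-c) + c*(1+k)))) by nra.
  assert (q3 : (1+c) * (((1+c)/2 - c*(1-c))*X - (2*k*(1-c) + c*(1+k))*Y) >= 0) by nra.
  nra. }
assert (f1 : (1-c)*(c*Z) <= c*((1+k)*Y*a)) by nra.
assert (f2 : a * (((1+c)/2 - c*(1-c))*X - (2*k*(1-c) + c*(1+k))*Y) >= 0) by nra.
assert (f3 : (1-c)*(a*(c*X) + a*(2*k*Y) + c*Z) <= (1-c)*((1+c)/(2*(1-c)) * a * X)).
{ replace ((1-c)*((1+c)/(2*(1-c)) * a * X)) with ((1+c)/2*a*X) by (field; lra). nra. }
apply Rmult_le_reg_l in f3; [|lra]. lra.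
Qed.

Lemma cv_dom (a b : nat -> R) la lb K : 0 <= K ->
  (forall n, Rabs (a n - la) <= K * Rabs (b n - lb)) -> Un_cv b lb -> Un_cv a la.
Proof.
intros HK H Hb eps Heps.
destruct (Hb (eps / (K+1))) as [N HN].
{ apply Rdiv_lt_0_compat; lra. }
exists N. intros n Hn. specialize (HN n Hn). unfold R_dist in *.
specialize (H n).
assert (K * Rabs (b n - lb) <= K * (eps / (K+1))) by (apply Rmult_le_compat_l; lra).
assert (K * (eps / (K+1)) < eps).
{ apply (Rmult_lt_reg_r (K+1)); [lra|].
  replace (K * (eps / (K+1)) * (K+1)) with (K*eps) by (field; lra). nra. }
lra.
Qed.

Lemma cv_ext (a b : nat -> R) l : (forall n, a n = b n) -> Un_cv a l -> Un_cv b l.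
Proof. intros H Ha eps He. destruct (Ha eps He) as [N HN]. exists N. intros n Hn. rewrite <- H. auto. Qed.

Lemma pow_le1 x n : 0 <= x <= 1 -> x ^ n <= 1.
Proof. intros Hx. induction n; simpl; [lra|]. pose proof (pow_le x n). nra. Qed.

Theorem theorem2
  (I : R -> Prop) (fl fr fl' fr' : R -> R) (ul ur pstar eta : R)
  (HI : is_open_interval I)
  (Hfl : C1_on I fl fl') (Hfr : C1_on I fr fr')
  (Hp : I pstar)
  (Hf0 : fl pstar + fr pstar + ur - ul = 0)
  (Hf'0 : fl' pstar + fr' pstar <> 0)
  (Heta : 0 < eta < 1) :
  exists eps, 0 < eps /\
    forall (p Fl Fr Fl' Fr' : nat -> R),
      (forall n, Fl' n + Fr' n <> 0) ->
      (forall n, p (S n) = p n - (Fl n + Fr n + ur - ul) / (Fl' n + Fr' n)) ->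
      Rabs (p 0%nat - pstar) <= eps ->
      (exists M, forall n, Rabs (Fl' n + Fr' n) <= M) ->
      (forall n, I (p n) ->
         Rabs (Fl n - fl (p n)) <= eta / 6 * Rabs (Fl n + Fr n + ur - ul) /\
         Rabs (Fr n - fr (p n)) <= eta / 6 * Rabs (Fl n + Fr n + ur - ul) /\
         Rabs (Fl' n - fl' (p n)) <= eta / 6 * Rabs (Fl' n + Fr' n) /\
         Rabs (Fr' n - fr' (p n)) <= eta / 6 * Rabs (Fl' n + Fr' n)) ->
      Un_cv p pstar /\
      Un_cv (fun n => / 2 * (ul + ur + Fr n - Fl n))
            (/ 2 * (ul + ur + fr pstar - fl pstar)).
Proof.
set (c := eta/3).
assert (c0 : 0 < c) by (unfold c; lra).
assert (c1 : 3*c < 1) by (unfold c; lra).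
set (D := fl' pstar + fr' pstar).
set (k := (1-3*c)/16).
assert (hk : 0 < k < 1/16) by (unfold k; lra).
assert (hD : 0 < Rabs D) by (apply Rabs_pos_lt; exact Hf'0).
destruct HI as [Hconv Hopen].
destruct (Hopen pstar Hp) as [d2 [Hd2 Hd2I]].
assert (Hcont : continuity_pt (fl' + fr')%F pstar).
{ apply continuity_pt_plus; [apply (Hfl pstar Hp)|apply (Hfr pstar Hp)]. }
destruct (Hcont (k * Rabs D)) as [alp [Halp Hal]].
{ apply Rmult_lt_0_compat; lra. }
assert (Hg' : forall x, Rabs (x - pstar) < alp -> Rabs (fl' x + fr' x - D) <= k * Rabs D).
{ intros x Hx. destruct (Req_dec x pstar) as [->|Hne].
  - assert (E: fl' pstar + fr' pstar - D = 0) by (unfold D; ring). rewrite E, Rabs_R0. nra.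
  - left. apply (Hal x). split; [split; [constructor|auto]|exact Hx]. }
set (r := Rmin d2 alp).
assert (Hr : 0 < r) by (unfold r; apply Rmin_glb_lt; auto).
assert (HrI : forall x, Rabs (x - pstar) < r -> I x).
{ intros x Hx. apply Hd2I. pose proof (Rmin_l d2 alp). fold r in H. lra. }
assert (Hra : r <= alp) by apply Rmin_r.
assert (Hmvt : forall x, Rabs (x - pstar) < r -> exists xi, Rabs (xi - pstar) <= Rabs (x - pstar) /\
          fl x + fr x + ur - ul = (fl' xi + fr' xi) * (x - pstar)).
{ intros x Hx.
  assert (Hder : forall a b, Rabs (a - pstar) < r -> Rabs (b - pstar) < r -> a < b ->
     exists xi, a < xi < b /\ (fl b + fr b) - (fl a + fr a) = (fl' xi + fr' xi) * (b - a)).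
  { intros a b Ha Hb Hab. destruct (MVT_cor2 (fl + fr)%F (fl' + fr')%F a b Hab) as [xi [E Hxi]].
    - intros y Hy. assert (Iy : I y).
      { apply HrI. apply Rabs_def1; [apply Rabs_def2 in Ha; apply Rabs_def2 in Hb; lra|
                                     apply Rabs_def2 in Ha; apply Rabs_def2 in Hb; lra]. }
      apply derivable_pt_lim_plus; [apply (Hfl y Iy)|apply (Hfr y Iy)].
    - exists xi. split; auto. }
  destruct (total_order_T x pstar) as [[Hlt|Heq]|Hgt].
  - destruct (Hder x pstar Hx ltac:(rewrite Rminus_diag, Rabs_R0; lra) Hlt) as [xi [Hxi E]].
    exists xi. split.
    + rewrite !Rabs_left1 by lra. lra.
    + replace (fl x + fr x + ur - ul) with ((fl x + fr x) - (fl pstar + fr pstar)) by lra.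
      replace ((fl x + fr x) - (fl pstar + fr pstar)) with (- ((fl pstar + fr pstar) - (fl x + fr x))) by ring.
      rewrite E. ring.
  - subst x. exists pstar. split; [lra|]. rewrite Hf0. ring.
  - destruct (Hder pstar x ltac:(rewrite Rminus_diag, Rabs_R0; lra) Hx Hgt) as [xi [Hxi E]].
    exists xi. split.
    + rewrite !Rabs_right by lra. lra.
    + replace (fl x + fr x + ur - ul) with ((fl x + fr x) - (fl pstar + fr pstar)) by lra.
      rewrite E. ring. }
exists (r/2). split; [lra|].
intros p Fl Fr Fl' Fr' HF'0 Hrec Hp0 _ Hbd.
set (rho := (1+c)/(2*(1-c))).
assert (Hrho : 0 < rho < 1).
{ unfold rho. split; [apply Rdiv_lt_0_compat; lra|].
  apply (Rmult_lt_reg_r (2*(1-c))); [lra|]. unfold Rdiv. rewrite Rmult_assoc, Rinv_l by lra. lra. }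
assert (key : forall n, Rabs (p n - pstar) <= r/2 ->
   Rabs (p (S n) - pstar) <= rho * Rabs (p n - pstar) /\
   (1-c) * Rabs (Fl n + Fr n + ur - ul) <= (1+k) * Rabs D * Rabs (p n - pstar)).
{ intros n Hn.
  assert (Hn' : Rabs (p n - pstar) < r) by lra.
  destruct (Hbd n (HrI _ Hn')) as [b1 [b2 [b3 b4]]].
  destruct (Hmvt _ Hn') as [xi [Hxi E]].
  assert (Hs := step c (p n - pstar) (Fl n + Fr n + ur - ul) (Fl' n + Fr' n)
            (fl (p n) + fr (p n) + ur - ul) (fl' (p n) + fr' (p n)) (fl' xi + fr' xi) D
            c0 c1 (HF'0 n) Hf'0).
  destruct Hs as [S1 S2].
  - replace (Fl n + Fr n + ur - ul - (fl (p n) + fr (p n) + ur - ul))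
      with ((Fl n - fl (p n)) + (Fr n - fr (p n))) by ring.
    pose proof (Rabs_triang (Fl n - fl (p n)) (Fr n - fr (p n))). unfold c. lra.
  - replace (Fl' n + Fr' n - (fl' (p n) + fr' (p n)))
      with ((Fl' n - fl' (p n)) + (Fr' n - fr' (p n))) by ring.
    pose proof (Rabs_triang (Fl' n - fl' (p n)) (Fr' n - fr' (p n))). unfold c. lra.
  - exact E.
  - apply Hg'. lra.
  - apply Hg'. lra.
  - split; [|exact S2].
    rewrite Hrec. replace (p n - (Fl n + Fr n + ur - ul) / (Fl' n + Fr' n) - pstar)
      with (p n - pstar - (Fl n + Fr n + ur - ul) / (Fl' n + Fr' n)) by ring.
    exact S1. }
assert (Hind : forall n, Rabs (p n - pstar) <= rho ^ n * (r/2)).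
{ induction n.
  - simpl. lra.
  - assert (rho ^ n <= 1) by (apply pow_le1; lra).
    assert (Rabs (p n - pstar) <= r/2) by nra.
    destruct (key n H0) as [K1 _]. simpl. nra. }
assert (Hpcv : Un_cv p pstar).
{ apply (cv_dom p (fun n => rho ^ n) pstar 0 (r/2)); [lra| |].
  - intros n. rewrite Rminus_0_r, (Rabs_right (rho ^ n)) by (apply Rle_ge, pow_le; lra). rewrite Rmult_comm. apply Hind.
  - intros e He. destruct (pow_lt_1_zero rho ltac:(rewrite Rabs_right; lra) e He) as [N HN].
    exists N. intros n Hn. unfold R_dist. rewrite Rminus_0_r. apply HN. exact Hn. }
split; [exact Hpcv|].
set (K := (1+k) * Rabs D / (1-c)).
assert (HK : 0 <= K) by (unfold K; apply Rmult_le_pos; [nra|left; apply Rinv_0_lt_compat; lra]).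
assert (HG : forall n, Rabs (Fl n + Fr n + ur - ul) <= K * Rabs (p n - pstar)).
{ intros n. assert (Rabs (p n - pstar) <= r/2).
  { assert (rho ^ n <= 1) by (apply pow_le1; lra). pose proof (Hind n). nra. }
  destruct (key n H) as [_ K2].
  apply (Rmult_le_reg_l (1-c)); [lra|]. unfold K.
  replace ((1 - c) * ((1 + k) * Rabs D / (1 - c) * Rabs (p n - pstar)))
    with ((1 + k) * Rabs D * Rabs (p n - pstar)) by (field; lra). exact K2. }
assert (Hin : forall n, I (p n)).
{ intros n. apply HrI. assert (rho ^ n <= 1) by (apply pow_le1; lra). pose proof (Hind n). nra. }
assert (Hcv1 : forall (F : nat -> R) (f f' : R -> R), C1_on I f f' ->
   (forall n, Rabs (F n - f (p n)) <= eta / 6 * Rabs (Fl n + Fr n + ur - ul)) ->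
   Un_cv F (f pstar)).
{ intros F f f' Hf HF.
  assert (E1 : Un_cv (fun n => F n - f (p n)) 0).
  { apply (cv_dom _ p 0 pstar (eta/6*K)); [nra| |exact Hpcv].
    intros n. rewrite Rminus_0_r. rewrite Rmult_assoc.
    apply Rle_trans with (1 := HF n). apply Rmult_le_compat_l; [lra|apply HG]. }
  assert (E2 : Un_cv (fun n => f (p n)) (f pstar)).
  { apply continuity_seq; [|exact Hpcv].
    apply derivable_continuous_pt. exists (f' pstar). apply (proj1 (Hf pstar Hp)). }
  pose proof (CV_plus _ _ _ _ E1 E2) as E3. rewrite Rplus_0_l in E3.
  apply (cv_ext _ _ _ (fun n => ltac:(ring)) E3) || (eapply cv_ext; [|exact E3]; intros n; simpl; ring). }
assert (CFl : Un_cv Fl (fl pstar)) by (apply (Hcv1 Fl fl fl' Hfl); intros n; apply (Hbd n (Hin n))).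
assert (CFr : Un_cv Fr (fr pstar)) by (apply (Hcv1 Fr fr fr' Hfr); intros n; apply (Hbd n (Hin n))).
pose proof (CV_minus _ _ _ _ CFr CFl) as CD.
apply (cv_dom _ _ _ _ (/2) ltac:(lra) ) with (2 := CD).
intros n. 
replace (/ 2 * (ul + ur + Fr n - Fl n) - / 2 * (ul + ur + fr pstar - fl pstar))
  with (/2 * ((Fr n - Fl n) - (fr pstar - fl pstar))) by ring.
rewrite Rabs_mult, (Rabs_right (/2)) by lra. lra.
Qed.
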